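(* Let $q$ be a prime power, let $r,m>1$ be integers, $n=rm$, and let $k$ be an integer with $1<k\le m$. Let $s_1,s_2\ge1$, let $V_{1,1},\dots,V_{1,s_1}\in\mathcal{G}_q(m,k)$ and $\mathcal{C}_1=\bigcup_{h_1=1}^{s_1}\mathrm{Orb}_{\mathbb{F}_{q^m}^*}(V_{1,h_1})$. For $h_2=1,\dots,s_2$ let $\Phi_{2,h_2}:\mathbb{F}_{q^m}\to\mathbb{F}_{q^n}$ be an injective $\mathbb{F}_q$-linear map, $V_{2,h_2}=\Phi_{2,h_2}(\mathbb{F}_{q^m})$, and $\mathcal{C}_2=\bigcup_{h_2=1}^{s_2}\mathrm{Orb}_{\mathbb{F}_{q^n}^*}(V_{2,h_2})\subseteq\mathcal{G}_q(n,m)$. Define $$\mathcal{C}_2\odot\mathcal{C}_1=\bigcup_{h_2=1}^{s_2}\bigcup_{h_1=1}^{s_1}\bigcup_{\alpha\in\mathbb{F}_{q^m}^*}\mathrm{Orb}_{\mathbb{F}_{q^n}^*}\big(\Phi_{2,h_2}(\alpha V_{1,h_1})\big)\subseteq\mathcal{G}_q(n,k).$$ If $\mathcal{C}_2$ is full-length and $d(\mathcal{C}_2)>2(m-k)$, then $\mathcal{C}_2\odot\mathcal{C}_1$ is a full-length multi-orbit cyclic subspace code.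
   Context: For positive integers $k\le N$, $\mathcal{G}_q(N,k)$ denotes the set of $k$-dimensional $\mathbb{F}_q$-subspaces of $\mathbb{F}_{q^N}$. The subspace distance is $d(U,V)=\dim_{\mathbb{F}_q}(U+V)-\dim_{\mathbb{F}_q}(U\cap V)$, and $d(\mathcal{C})=\min\{d(U,V):U,V\in\mathcal{C},U\ne V\}$. For $V\in\mathcal{G}_q(N,k)$, $\mathrm{Orb}_{\mathbb{F}_{q^N}^*}(V)=\{\beta V:\beta\in\mathbb{F}_{q^N}^*\}$; a (multi-orbit) cyclic subspace code is a finite union of such orbits. A one-orbit code $\mathrm{Orb}_{\mathbb{F}_{q^N}^*}(V)$ is full-length if $\{\beta\in\mathbb{F}_{q^N}^*:\beta V=V\}=\mathbb{F}_q^*$; a union $\bigcup_i\mathrm{Orb}(V_i)$ is full-length if each $\mathrm{Orb}(V_i)$ is full-length. *)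

(* Defs.v *)
From HB Require Import structures.
From mathcomp Require Import all_boot all_order all_algebra all_field.
Set Implicit Arguments. Unset Strict Implicit. Unset Printing Implicit Defensive.
Import GRing.Theory.
Local Open Scope ring_scope.

(* F_q is a finite field K; F_{q^N} is a field extension L of K with \dim {:L} = N.
   Subspaces are K-subspaces {vspace L}; the F_q^* inside L is (1%VS) minus 0. *)

Section Defs.
Variable K : finFieldType.

Definition smul (L : fieldExtType K) (b : L) (V : {vspace L}) : {vspace L} :=
  (amull b @: V)%VS.

Definition Orb (L : fieldExtType K) (V : {vspace L}) : {vspace L} -> Prop :=
  fun U => exists2 b : L, b != 0 & U = smul b V.

Definition sdist (L : fieldExtType K) (U V : {vspace L}) : nat :=
  (\dim (U + V) - \dim (U :&: V))%N.

Definition full_length_orb (L : fieldExtType K) (V : {vspace L}) : Prop :=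
  forall b : L, b != 0 -> (smul b V = V <-> b \in 1%VS).

End Defs.

(* Main.v *)
Require Import Defs.
From HB Require Import structures.
From mathcomp Require Import all_boot all_order all_algebra all_field.
From mathcomp Require Import zify.
Import GRing.Theory.
Local Open Scope ring_scope.

Lemma dim_inj (K : finFieldType) (A B : fieldExtType K) (f : 'Hom(A, B)) U :
  injective f -> \dim (f @: U)%VS = \dim U.
Proof. by move=> /lker0P/eqP fi; apply: limg_dim_eq; rewrite fi capv0. Qed.

Lemma dim_smul (K : finFieldType) (L : fieldExtType K) (b : L) V :
  b != 0 -> \dim (smul b V) = \dim V.
Proof.
move=> b0; apply: dim_inj; apply/lker0P; apply: lker0_amull.
by rewrite unitfE.
Qed.

Lemma smulE (K : finFieldType) (L : fieldExtType K) (b v : L) :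
  amull b v = b * v.
Proof. by rewrite lfunE. Qed.

Theorem proposition2p9 (K : finFieldType) (Lm Ln : fieldExtType K)
  (r m n k s1 s2 : nat)
  (hr : (1 < r)%N) (hm : (1 < m)%N) (hn : n = (r * m)%N)
  (hk1 : (1 < k)%N) (hkm : (k <= m)%N)
  (hdimm : \dim {:Lm} = m) (hdimn : \dim {:Ln} = n)
  (hs1 : (1 <= s1)%N) (hs2 : (1 <= s2)%N)
  (V1 : 'I_s1 -> {vspace Lm}) (hV1 : forall h, \dim (V1 h) = k)
  (Phi2 : 'I_s2 -> 'Hom(Lm, Ln)) (hPhi : forall h, injective (Phi2 h)) :
  let V2 := fun h => (Phi2 h @: fullv)%VS in
  let C2 := fun U : {vspace Ln} => exists h, Orb (V2 h) U in
  (forall h, full_length_orb (V2 h)) ->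
  (forall U W, C2 U -> C2 W -> U <> W -> (2 * (m - k) < sdist U W)%N) ->
  forall (h2 : 'I_s2) (h1 : 'I_s1) (a : Lm), a != 0 ->
    \dim (Phi2 h2 @: smul a (V1 h1))%VS = k /\
    full_length_orb (Phi2 h2 @: smul a (V1 h1))%VS.
Proof.
move=> V2 C2 hfl hd h2 h1 a a0.
have dW : \dim (Phi2 h2 @: smul a (V1 h1))%VS = k.
  by rewrite dim_inj // dim_smul.
split => // b b0.
set W := (Phi2 h2 @: smul a (V1 h1))%VS.
have dV2 : \dim (V2 h2) = m by rewrite /V2 dim_inj.
split.
- move=> bW.
  apply/(hfl h2 b b0).
  have WV : (W <= V2 h2)%VS by apply: limgS; apply: subvf.
  have Wb : (W <= smul b (V2 h2))%VS by rewrite -bW; apply: limgS.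
  have dcap : (k <= \dim (smul b (V2 h2) :&: V2 h2))%N.
    by rewrite -dW; apply: dimvS; rewrite subv_cap Wb WV.
  apply/eqP; apply: contraT => /eqP ne.
  have e1 : V2 h2 = smul 1 (V2 h2) by rewrite /smul amull1 lim1g.
  have := hd _ _ (ex_intro _ h2 (ex_intro2 _ _ b b0 erefl))
              (ex_intro _ h2 (ex_intro2 _ _ 1 (oner_neq0 _) e1)) ne.
  rewrite /sdist.
  have := dimv_sum_cap (smul b (V2 h2)) (V2 h2).
  rewrite dim_smul // dV2.
  have : (\dim (smul b (V2 h2) :&: V2 h2) <= m)%N.
    by rewrite -dV2; apply: dimvS; apply: capvSr.
  lia.
- move=> /vlineP [c bc].
  have c0 : c != 0 by apply: contraNneq b0 => c0; rewrite bc c0 scale0r.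
  apply/eqP; rewrite eqEdim dim_smul // leqnn andbT.
  apply/subvP => x /memv_imgP [w wW ->].
  by rewrite smulE bc -scalerAl mul1r memvZ.
Qed.
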